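(* Let $\mathcal{H}$ be a real Hilbert space, $N\ge2$, $A_1,\dots,A_N:\mathcal{H}\rightrightarrows\mathcal{H}$ maximally monotone, $\theta\in(0,1)$, and $\Gamma\subseteq\mathbb{R}_{++}$ a nonempty closed interval. For $\gamma\in\Gamma$ let $T_\gamma:\mathcal{H}^{N-1}\to\mathcal{H}^{N-1}$ be the Malitsky--Tam operator and, for $\gamma,\delta\in\mathbb{R}_{++}$, let $\tilde{\mathcal{Q}}_{\delta\leftarrow\gamma}$ be the relocator, both defined in the context. Then for any nonempty bounded set $S\subseteq\bigcup_{\gamma\in\Gamma}(\operatorname{Fix}T_\gamma\times\{\gamma\})$ there exists $L\ge0$ with $\|\tilde{\mathcal{Q}}_{\delta\leftarrow\gamma}\mathbf{x}-\tilde{\mathcal{Q}}_{\gamma\leftarrow\gamma}\mathbf{x}\|\le L|\delta-\gamma|$ for all $\delta\in\Gamma$ and all $(\mathbf{x},\gamma)\in S$.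
   Context: $J_A=(\mathrm{Id}+A)^{-1}$. Malitsky--Tam operator: for $\mathbf{x}=(x^1,\dots,x^{N-1})\in\mathcal{H}^{N-1}$, set $z^1=J_{\gamma A_1}x^1$, $z^i=J_{\gamma A_i}(z^{i-1}+x^i-x^{i-1})$ for $i=2,\dots,N-1$, $z^N=J_{\gamma A_N}(z^1+z^{N-1}-x^{N-1})$, and $T_\gamma\mathbf{x}=\mathbf{x}+\theta(z^2-z^1,\dots,z^N-z^{N-1})$. Relocator: $\tilde{\mathcal{Q}}^1_{\delta\leftarrow\gamma}\mathbf{x}=\frac{\delta}{\gamma}x^1+(1-\frac{\delta}{\gamma})J_{\gamma A_1}x^1$ and $\tilde{\mathcal{Q}}^i_{\delta\leftarrow\gamma}\mathbf{x}=\frac{\delta}{\gamma}(x^i-x^1)+\tilde{\mathcal{Q}}^1_{\delta\leftarrow\gamma}\mathbf{x}$ for $i=2,\dots,N-1$; $\tilde{\mathcal{Q}}_{\delta\leftarrow\gamma}=(\tilde{\mathcal{Q}}^1_{\delta\leftarrow\gamma},\dots,\tilde{\mathcal{Q}}^{N-1}_{\delta\leftarrow\gamma})$. $\mathcal{H}^{N-1}$ carries the product Hilbert norm. *)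

(* Defs.v *)
From HB Require Import structures.
From mathcomp Require Import all_boot all_order all_algebra.
From mathcomp Require Import all_classical all_reals all_analysis.
From Stdlib Require Import ClassicalEpsilon.
Set Implicit Arguments. Unset Strict Implicit. Unset Printing Implicit Defensive.
Import Order.TTheory GRing.Theory Num.Theory.
Local Open Scope ring_scope.
Local Open Scope classical_set_scope.

Section Hilbert.
Variables (R : realType) (H : lmodType R) (ip : H -> H -> R).

Definition hnorm (x : H) : R := Num.sqrt (ip x x).

Definition isHilbert : Prop :=
  [/\ (forall x y, ip x y = ip y x),
      (forall a x y z, ip (a *: x + y) z = a * ip x z + ip y z),
      (forall x, 0 <= ip x x),
      (forall x, ip x x = 0 -> x = 0) &
      (forall u : nat -> H,
        (forall e : R, 0 < e -> exists M : nat, forall m n : nat,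
             (M <= m)%N -> (M <= n)%N -> hnorm (u m - u n) < e) ->
        exists l : H, forall e : R, 0 < e -> exists M : nat, forall n : nat,
             (M <= n)%N -> hnorm (u n - l) < e)].

(* set-valued operators A : H => H given by their graph: A x u <-> u \in A x *)
Definition monotone_op (A : H -> H -> Prop) : Prop :=
  forall x y u v, A x u -> A y v -> 0 <= ip (x - y) (u - v).

Definition maxmonotone (A : H -> H -> Prop) : Prop :=
  monotone_op A /\
  forall B : H -> H -> Prop, monotone_op B ->
    (forall x u, A x u -> B x u) -> forall x u, B x u -> A x u.

(* resolvent J_{g A} x = (Id + g A)^{-1} x; a point p with x \in p + g A p.
   For A maximally monotone and g > 0 this point exists and is unique
   (Minty), so the choice below is exactly the resolvent. *)
Definition resolvent (g : R) (A : H -> H -> Prop) (x : H) : H :=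
  epsilon (inhabits 0) (fun p => exists u, A p u /\ x = p + g *: u).

Definition pnorm (n : nat) (x : 'I_n -> H) : R :=
  Num.sqrt (\sum_(j < n) ip (x j) (x j)).

Section MT.
Variables (N : nat) (As : nat -> H -> H -> Prop) (theta g : R).

(* A_i = As i for i = 1..N (1-based; other indices unused) *)
Definition J (i : nat) (x : H) : H := resolvent g (As i) x.

(* 1-based access to x = (x^1,...,x^{N-1}) *)
Definition xs (x : 'I_N.-1 -> H) (i : nat) : H :=
  if i is k.+1 then (if insub k is Some j then x j else 0) else 0.

Fixpoint mtz (x : 'I_N.-1 -> H) (i : nat) : H :=
  match i with
  | 0 => 0
  | 1 => J 1 (xs x 1)
  | (k.+1 as i').+1 => J i'.+1 (mtz x i' + xs x i'.+1 - xs x i')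
  end.

Definition MTz (x : 'I_N.-1 -> H) (i : nat) : H :=
  if i == N then J N (mtz x 1 + mtz x N.-1 - xs x N.-1) else mtz x i.

Definition MT_T (x : 'I_N.-1 -> H) : 'I_N.-1 -> H :=
  fun j => x j + theta *: (MTz x (j.+2) - MTz x (j.+1)).

End MT.

Definition reloc (N : nat) (As : nat -> H -> H -> Prop) (d g : R)
    (x : 'I_N.-1 -> H) : 'I_N.-1 -> H :=
  let Q1 := (d / g) *: xs x 1 + (1 - d / g) *: J As g 1 (xs x 1) in
  fun j => if (j : nat) == 0%N then Q1 else (d / g) *: (x j - xs x 1) + Q1.

End Hilbert.

(* Main.v *)
Require Import Defs.
From HB Require Import structures.
From mathcomp Require Import all_boot all_order all_algebra.
From mathcomp Require Import all_classical all_reals all_analysis.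
From Stdlib Require Import ClassicalEpsilon Classical.
From mathcomp Require Import ring lra zify.
Set Implicit Arguments. Unset Strict Implicit.
Import Order.TTheory GRing.Theory Num.Theory numFieldTopology.Exports numFieldNormedType.Exports.
Local Open Scope ring_scope.
Local Open Scope classical_set_scope.

Section Hil.
Variables (R : realType) (H : lmodType R) (ip : H -> H -> R).
Hypothesis hH : isHilbert ip.

Lemma ipC x y : ip x y = ip y x.
Proof. by case: hH. Qed.
Lemma ip_ge0 x : 0 <= ip x x.
Proof. by case: hH. Qed.
Lemma ip_eq0 x : ip x x = 0 -> x = 0.
Proof. by case: hH => _ _ _ h _; apply: h. Qed.
Lemma ipL a x y z : ip (a *: x + y) z = a * ip x z + ip y z.
Proof. by case: hH. Qed.
Lemma ipDl x y z : ip (x + y) z = ip x z + ip y z.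
Proof. by rewrite -[x in LHS]scale1r ipL mul1r. Qed.
Lemma ip0l z : ip 0 z = 0.
Proof. have := ipDl 0 0 z; rewrite addr0 => h; lra. Qed.
Lemma ipZl a x z : ip (a *: x) z = a * ip x z.
Proof. by rewrite -[a *: x]addr0 ipL ip0l addr0. Qed.
Lemma ipNl x z : ip (- x) z = - ip x z.
Proof. by rewrite -scaleN1r ipZl mulN1r. Qed.
Lemma ipBl x y z : ip (x - y) z = ip x z - ip y z.
Proof. by rewrite ipDl ipNl. Qed.
Lemma ipDr x y z : ip z (x + y) = ip z x + ip z y.
Proof. by rewrite ipC ipDl ipC [ip y z]ipC. Qed.
Lemma ipZr a x z : ip z (a *: x) = a * ip z x.
Proof. by rewrite ipC ipZl ipC. Qed.
Lemma ipNr x z : ip z (- x) = - ip z x.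
Proof. by rewrite ipC ipNl ipC. Qed.
Lemma ipBr x y z : ip z (x - y) = ip z x - ip z y.
Proof. by rewrite ipDr ipNr. Qed.
Lemma ip0r z : ip z 0 = 0.
Proof. by rewrite ipC ip0l. Qed.

Definition ipE := (ipDl, ipDr, ipBl, ipBr, ipNl, ipNr, ipZl, ipZr, ip0l, ip0r).

Lemma ip_par x y : ip (x + y) (x + y) <= 2 * ip x x + 2 * ip y y.
Proof.
have := ip_ge0 (x - y); rewrite !ipE [ip y x]ipC => h.
lra.
Qed.

Lemma ip_par' x y : ip (x - y) (x - y) <= 2 * ip x x + 2 * ip y y.
Proof. have := ip_par x (- y); by rewrite !ipNl !ipNr opprK. Qed.

(* ip e w <= (t ip e e + ip w w / t)/2 *)
Lemma ip_small w eps : 0 < eps -> exists2 del, 0 < del &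
  forall e, ip e e < del -> ip e w <= eps.
Proof.
move=> he; set W := ip w w + 1.
have hW : 0 < W by rewrite /W; have := ip_ge0 w; lra.
exists (eps ^+ 2 / W); first by rewrite divr_gt0 // exprn_gt0.
move=> e hee; set t := W / eps.
have ht : 0 < t by rewrite divr_gt0.
have := ip_ge0 (t *: e - w); rewrite !ipE [ip w e]ipC => h.
have h1 : t * ip e e <= eps.
  have -> : eps = t * (eps ^+ 2 / W) by rewrite /t; field; lra.
  by rewrite ler_pM2l // ltW.
have h2 : ip w w <= t * eps.
  by rewrite /t divfK ?gt_eqF //; rewrite /W; lra.
have h3 : 2 * t * ip e w <= t * t * ip e e + ip w w by lra.
have : t * (2 * ip e w) <= t * (2 * eps) by nra.
rewrite ler_pM2l //; lra.
Qed.


Lemma small_inv (del : R) : 0 < del -> exists M : nat, forall n, (M <= n)%N -> n.+1%:R^-1 < del.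
Proof.
move=> hd; exists (Num.Def.archi_bound del^-1) => n hn.
have h : 0 <= del^-1 by rewrite invr_ge0 ltW.
have {}h := archi_boundP h.
have h2 : del^-1 < n.+1%:R.
  apply: lt_le_trans h _; rewrite ler_nat; lia.
rewrite -[del]invrK ltf_pV2 ?posrE ?invr_gt0 ?ltr0n //.
Qed.

Lemma hnorm_lt y e : 0 < e -> ip y y < e ^+ 2 -> hnorm ip y < e.
Proof.
move=> he h; rewrite /hnorm -[e]ger0_norm ?(ltW he) // -sqrtr_sqr ltr_sqrt //.
by rewrite exprn_gt0.
Qed.

Lemma hnorm_lt' y d : 0 < d -> hnorm ip y < Num.sqrt d -> ip y y < d.
Proof. by move=> hd; rewrite /hnorm ltr_sqrt. Qed.

Definition mrel (B : H -> H -> Prop) x u := forall a v, B a v -> 0 <= ip (x - a) (u - v).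

Lemma maxrel B x u : maxmonotone ip B -> mrel B x u -> B x u.
Proof.
case=> hm hmax hr.
pose C p w := B p w \/ (p = x /\ w = u).
apply: (hmax C); last by right.
- move=> p q w z [hp|[-> ->]] [hq|[-> ->]].
  + exact: hm.
  + have := hr _ _ hp; rewrite !ipE; lra.
  + exact: hr.
  + by rewrite !subrr ip0l.
- by move=> ? ? ?; left.
Qed.

Lemma graph_ne B : maxmonotone ip B -> exists a v, B a v.
Proof.
move=> hB; case: (classic (exists a v, B a v)) => // hn.
exists 0, 0; apply: maxrel => // a v hav; exfalso; apply: hn; eauto.
Qed.

Definition gF a v x u := ip x v + ip a u - ip a v + (ip x x + ip u u) / 2.

Lemma Fq B x u c : maxmonotone ip B -> (forall a v, B a v -> gF a v x u <= c) ->
  ip x u + (ip x x + ip u u) / 2 <= c.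
Proof.
move=> hB hc; case: (classic (mrel B x u)) => hr.
- by have := hc x u (@maxrel B x u hB hr); rewrite /gF; lra.
- have [a ha] := not_all_ex_not _ _ hr.
  have [v hv] := not_all_ex_not _ _ ha.
  have [hav hn] := imply_to_and _ _ hv.
  have hlt : ip (x - a) (u - v) < 0 by rewrite ltNge; apply/negP.
  by have := hc _ _ hav; move: hlt; rewrite /gF !ipE; lra.
Qed.


Lemma gF_mid a v x1 u1 x2 u2 :
  gF a v (2^-1 *: (x1 + x2)) (2^-1 *: (u1 + u2)) =
  (gF a v x1 u1 + gF a v x2 u2) / 2
  - (ip (x1 - x2) (x1 - x2) + ip (u1 - u2) (u1 - u2)) / 8.
Proof. rewrite /gF !ipE [ip x2 x1]ipC [ip u2 u1]ipC; by field. Qed.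

Lemma gF_shift a v X U x u :
  gF a v X U <= gF a v x u + ip (X - x) (v + X) + ip (U - u) (a + U).
Proof.
have := ip_ge0 (X - x); have := ip_ge0 (U - u).
rewrite /gF !ipE [ip x X]ipC [ip u U]ipC [ip U a]ipC [ip u a]ipC; lra.
Qed.


Lemma minty0 B : maxmonotone ip B -> exists x, B x (- x).
Proof.
move=> hB; have [a0 [v0 h0]] := graph_ne hB.
have hmono := hB.1.
pose V : set R := [set c | exists x u, forall a v, B a v -> gF a v x u <= c].
have hV0 : V (ip a0 v0 + (ip a0 a0 + ip v0 v0) / 2).
  exists a0, v0 => a v hav; have := hmono _ _ _ _ h0 hav.
  by rewrite /gF !ipE; lra.
have hVlb : forall c, V c -> 0 <= c.
  move=> c [x [u hxu]]; have := Fq hB hxu; have := ip_ge0 (x + u).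
  by rewrite !ipE [ip u x]ipC; lra.
have hinf : has_inf V.
  by split; [exists (ip a0 v0 + (ip a0 a0 + ip v0 v0) / 2) | exists 0 => c /hVlb].
have hmV : forall x u (c : R), (forall a v, B a v -> gF a v x u <= c) -> inf V <= c.
  by move=> x u c h; apply: ge_inf; [exact: hinf.2 | exists x, u].
set m := inf V in hmV hinf *.
have hseq : forall n : nat, exists p : H * H,
    forall a v, B a v -> gF a v p.1 p.2 <= m + n.+1%:R^-1.
  move=> n; have hn : 0 < n.+1%:R^-1 :> R by rewrite invr_gt0 ltr0n.
  have [c [x [u hc]] hlt] := inf_adherent hn hinf.
  by exists (x, u) => a v hav /=; apply: le_trans (hc _ _ hav) (ltW hlt).
have [z hz] := boolp.choice hseq.
have hmid : forall x1 u1 x2 u2 (c1 c2 : R),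
    (forall a v, B a v -> gF a v x1 u1 <= c1) ->
    (forall a v, B a v -> gF a v x2 u2 <= c2) ->
    ip (x1 - x2) (x1 - x2) + ip (u1 - u2) (u1 - u2) <= 4 * (c1 + c2 - 2 * m).
  move=> x1 u1 x2 u2 c1 c2 h1 h2.
  have := hmV (2^-1 *: (x1 + x2)) (2^-1 *: (u1 + u2))
     ((c1 + c2) / 2 - (ip (x1 - x2) (x1 - x2) + ip (u1 - u2) (u1 - u2)) / 8).
  move=> h; suff : m <= (c1 + c2) / 2 - (ip (x1 - x2) (x1 - x2) + ip (u1 - u2) (u1 - u2)) / 8 by lra.
  apply: h => a v hav; rewrite gF_mid; have := h1 _ _ hav; have := h2 _ _ hav.
  lra.
have hcauchy : forall k n, ip ((z k).1 - (z n).1) ((z k).1 - (z n).1) <= 4 * (k.+1%:R^-1 + n.+1%:R^-1)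
     /\ ip ((z k).2 - (z n).2) ((z k).2 - (z n).2) <= 4 * (k.+1%:R^-1 + n.+1%:R^-1).
  move=> k n; have := hmid _ _ _ _ _ _ (hz k) (hz n).
  have := ip_ge0 ((z k).1 - (z n).1); have := ip_ge0 ((z k).2 - (z n).2).
  move: (k.+1%:R^-1) (n.+1%:R^-1) => ik in_ *; split; lra.
have hcompl : forall (u : nat -> H),
    (forall k n, ip (u k - u n) (u k - u n) <= 4 * (k.+1%:R^-1 + n.+1%:R^-1)) ->
    exists l : H, forall e : R, 0 < e -> exists M : nat, forall n : nat,
             (M <= n)%N -> hnorm ip (u n - l) < e.
  move=> u hu; case: hH => _ _ _ _ hc; apply: hc => e he.
  have h1 := small_inv (del := e ^+ 2 / 8).
  have [M hM] := h1 ltac:(by rewrite divr_gt0 ?exprn_gt0).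
  exists M => k n hk hn; apply: hnorm_lt => //.
  have := hu k n; have := hM _ hk; have := hM _ hn.
  move: (k.+1%:R^-1) (n.+1%:R^-1) (e ^+ 2) => ik in_ e2; lra.
have [X hX] := hcompl (fun n => (z n).1) (fun k n => (hcauchy k n).1).
have [U hU] := hcompl (fun n => (z n).2) (fun k n => (hcauchy k n).2).
have hUp : forall a v, B a v -> gF a v X U <= m.
  move=> a v hav; apply/ler_addgt0Pr => eps he.
  have he3 : 0 < eps / 3 by rewrite divr_gt0.
  have [d1 hd1 hs1] := ip_small (v + X) he3.
  have [d2 hd2 hs2] := ip_small (a + U) he3.
  have q1 : 0 < Num.sqrt d1 by rewrite sqrtr_gt0.
  have q2 : 0 < Num.sqrt d2 by rewrite sqrtr_gt0.
  have [M1 hM1] := hX _ q1.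
  have [M2 hM2] := hU _ q2.
  have [M3 hM3] := small_inv he3.
  pose n := maxn M1 (maxn M2 M3).
  have r1 := hnorm_lt' hd1 (hM1 n ltac:(rewrite /n; lia)).
  have r2 := hnorm_lt' hd2 (hM2 n ltac:(rewrite /n; lia)).
  have r3 := hM3 n ltac:(rewrite /n; lia).
  have e1 : X - (z n).1 = - ((z n).1 - X) by rewrite opprB.
  have e2 : U - (z n).2 = - ((z n).2 - U) by rewrite opprB.
  have s1 := hs1 (X - (z n).1) ltac:(by rewrite e1 ipNl ipNr opprK).
  have s2 := hs2 (U - (z n).2) ltac:(by rewrite e2 ipNl ipNr opprK).
  have := gF_shift a v X U (z n).1 (z n).2.
  have := hz n a v hav.
  move: s1 s2 r3; move: (n.+1%:R^-1) => i3; lra.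
have hK : forall a v, B a v ->
    m <= ip a v + ip X (a - X) + ip U (v - U) + (ip X X + ip U U) / 2.
  move=> a v hav.
  set Q := ip X X + ip U U.
  set w1 := a - X; set w2 := v - U.
  set D := ip w1 w1 + ip w2 w2.
  set K := ip a v + ip X w1 + ip U w2 + Q / 2 - m.
  have hD : 0 <= D by rewrite /D; have := ip_ge0 w1; have := ip_ge0 w2; lra.
  have hct : forall t, 0 < t -> t < 1 -> 0 <= t * K + t ^+ 2 * (D / 2).
    move=> t ht0 ht1.
    pose Qt := (ip (X + t *: w1) (X + t *: w1) + ip (U + t *: w2) (U + t *: w2)) / 2.
    have hm := hmV (X + t *: w1) (U + t *: w2) ((1 - t) * (m - Q / 2) + t * ip a v + Qt).
    have : m <= (1 - t) * (m - Q / 2) + t * ip a v + Qt.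
      apply: hm => a' v' hav'.
      have h1 := hUp a' v' hav'.
      have h2 := hmono _ _ _ _ hav hav'.
      rewrite /gF -/Qt.
      rewrite /gF in h1.
      rewrite ipDl ipZl ipDr ipZr /w1 /w2 ipBl ipBr.
      rewrite !ipE in h2.
      have p1 : 0 <= 1 - t by lra.
      have p2 := mulr_ge0 p1 (ltac:(rewrite subr_ge0; exact h1) : 0 <= m - (ip X v' + ip a' U - ip a' v' + (ip X X + ip U U) / 2)).
      have p3 := mulr_ge0 (ltW ht0) h2.
      rewrite /Q; nra.
    have eQ : Qt = (Q + 2 * t * (ip X w1 + ip U w2) + t ^+ 2 * D) / 2.
      rewrite /Qt /Q /D (ipDl X (t *: w1)) (ipDl U (t *: w2)) !(ipDr X (t *: w1)) !(ipDr U (t *: w2)).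
      rewrite !ipZl !ipZr [ip w1 X]ipC [ip w2 U]ipC.
      ring.
    rewrite eQ /K; nra.
  rewrite -subr_ge0 -/K.
  case: (leP 0 K) => // hKn.
  pose t := - K / (D + 1 - K).
  have hden : 0 < D + 1 - K by lra.
  have h1 : t * (D + 1 - K) = - K by rewrite /t divfK // gt_eqF.
  have ht0 : 0 < t by rewrite /t divr_gt0 // oppr_gt0.
  have ht1 : t < 1 by rewrite /t ltr_pdivrMr // mul1r; lra.
  have h2 : 0 <= K + t * D / 2.
    have := hct t ht0 ht1.
    have -> : t * K + t ^+ 2 * (D / 2) = t * (K + t * D / 2) by ring.
    by rewrite pmulr_rge0.
  have h4 : 0 < t * (1 - K) by rewrite mulr_gt0 //; lra.
  lra.
have hFq := Fq hB hUp.
have hr : mrel B (- U) (- X).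
  move=> a v hav; have := hK a v hav; have := ip_ge0 (X + U); move: hFq.
  rewrite !ipE [ip U X]ipC [ip a X]ipC; lra.
have hB2 := maxrel hB hr.
have hK2 := hK _ _ hB2.
have hXU : X + U = 0.
  apply: ip_eq0; apply/eqP; rewrite eq_le ip_ge0 andbT.
  move: hK2 hFq; rewrite !ipE [ip U X]ipC; lra.
have hU' : U = - X by apply/eqP; rewrite -addr_eq0 addrC hXU.
by exists X; move: hB2; rewrite hU' opprK.
Qed.


Lemma minty A g w : maxmonotone ip A -> 0 < g -> exists p u, A p u /\ w = p + g *: u.
Proof.
move=> [hm hmax] hg.
have hgi : 0 < g^-1 by rewrite invr_gt0.
have eD : forall y1 y2 : H, (y1 + w) - (y2 + w) = y1 - y2.
  by move=> y1 y2; rewrite opprD addrACA subrr addr0.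
pose B y s := A (y + w) (g^-1 *: s).
have hBm : monotone_op ip B.
  move=> y1 y2 s1 s2 h1 h2; have := hm _ _ _ _ h1 h2.
  by rewrite eD -scalerBr ipZr pmulr_rge0.
have hBmax : maxmonotone ip B.
  split; first exact: hBm.
  move=> C hC hBC y s hCys.
  pose C' p u := C (p - w) (g *: u).
  have hC'm : monotone_op ip C'.
    move=> p1 p2 u1 u2 h1 h2; have := hC _ _ _ _ h1 h2.
    by rewrite opprD opprK addrACA [- w + w]addrC subrr addr0 -scalerBr ipZr pmulr_rge0.
  have hAC : forall p u, A p u -> C' p u.
    move=> p u hpu; apply: hBC; rewrite /B subrK scalerA mulVf ?gt_eqF // scale1r //.
  have := hmax C' hC'm hAC (y + w) (g^-1 *: s).
  by rewrite /C' addrK scalerA mulfV ?gt_eqF // scale1r; apply.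
have [y hy] := minty0 hBmax.
exists (y + w), (g^-1 *: - y); split => //.
by rewrite scalerA mulfV ?gt_eqF // scale1r addrC addKr.
Qed.

Lemma resolvent_spec A g w : maxmonotone ip A -> 0 < g ->
  exists u, A (resolvent g A w) u /\ w = resolvent g A w + g *: u.
Proof.
move=> hA hg; rewrite /resolvent; apply: (@epsilon_spec H (inhabits 0) (fun p => exists u, A p u /\ w = p + g *: u)).
have [p [u hpu]] := minty w hA hg; by exists p, u.
Qed.

Lemma aux_qr q r : 0 <= ip q (r - q) -> ip q q <= ip r r.
Proof. have := ip_ge0 (q - r); rewrite !ipE [ip r q]ipC; lra. Qed.

Lemma res_bound A g w a u0 p u : monotone_op ip A -> 0 < g -> A a u0 -> A p u ->
  w = p + g *: u ->
  ip p p <= 4 * ip w w + 10 * ip a a + 8 * (g ^+ 2 * ip u0 u0).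
Proof.
move=> hm hg ha hp hw.
have h0 := hm _ _ _ _ hp ha.
have hgu : w - p = g *: u by rewrite hw addrC addKr.
have hi : 0 <= ip (p - a) ((w - a - g *: u0) - (p - a)).
  have -> : (w - a - g *: u0) - (p - a) = g *: (u - u0).
    by rewrite scalerBr -hgu opprB [RHS]addrAC [w - a - _]addrAC -!addrA addKr.
  by rewrite ipZr mulr_ge0 // ltW.
have hqr := aux_qr hi.
have h3 := ip_par (p - a) a; rewrite subrK in h3.
have h4 := ip_par' w (a + g *: u0).
rewrite opprD addrA in h4.
have h5 := ip_par a (g *: u0); rewrite !ipZl !ipZr in h5.
rewrite expr2 -mulrA; lra.
Qed.

End Hil.

Unset Implicit Arguments.
Lemma lin0 (R : realType) (H : lmodType R) (t : R) (y p : H) :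
  t *: y + (1 - t) *: p - y = (t - 1) *: (y - p).
Proof.
rewrite scalerBr !scalerBl !scale1r opprB.
by rewrite addrAC.
Qed.

Lemma lin_reloc (R : realType) (H : lmodType R) (t : R) (y x1 p : H) :
  t *: (y - x1) + (t *: x1 + (1 - t) *: p) - (1 *: (y - x1) + (1 *: x1 + (1 - 1) *: p)) =
  (t - 1) *: (y - p).
Proof.
rewrite subrr scale0r addr0 !scale1r subrK addrA -scalerDr subrK.
exact: lin0.
Qed.

Lemma lin_reloc0 (R : realType) (H : lmodType R) (t : R) (x1 p : H) :
  (t *: x1 + (1 - t) *: p) - (1 *: x1 + (1 - 1) *: p) = (t - 1) *: (x1 - p).
Proof. rewrite subrr scale0r addr0 scale1r; exact: lin0. Qed.

Lemma gam_lb (R : realType) (Gam : set R) : (forall g, Gam g -> 0 < g) -> closed Gam ->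
  exists2 e : R, 0 < e & forall g, Gam g -> e <= g.
Proof.
move=> hpos hcl.
have h0 : ~ closure Gam 0 by move=> /hcl /hpos; rewrite ltxx.
have [B hB] := not_all_ex_not _ _ h0.
have [hnb hne] := imply_to_and _ _ hB.
have [e he hbe] := (nbhs_ballP _ _).1 hnb.
exists e => // g hg; rewrite leNgt; apply/negP => hge.
apply: hne; exists g; split => //; apply: hbe.
by rewrite /ball /= sub0r normrN gtr0_norm ?hpos.
Qed.

Theorem lemma5p1 (R : realType) (H : lmodType R) (ip : H -> H -> R)
  (hH : isHilbert ip) (N : nat) (hN : (2 <= N)%N)
  (As : nat -> H -> H -> Prop)
  (hA : forall i, (1 <= i <= N)%N -> maxmonotone ip (As i))
  (theta : R) (htheta : 0 < theta < 1)
  (Gam : set R) (hG0 : Gam !=set0) (hGpos : forall g, Gam g -> 0 < g)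
  (hGcl : closed Gam)
  (hGint : forall a b c, Gam a -> Gam c -> a <= b -> b <= c -> Gam b)
  (S : set (('I_N.-1 -> H) * R)) (hS0 : S !=set0)
  (hSb : exists M : R, forall x g, S (x, g) ->
           Num.sqrt (pnorm ip x ^+ 2 + g ^+ 2) <= M)
  (hSfix : forall x g, S (x, g) -> Gam g /\ MT_T As theta g x = x) :
  exists L : R, 0 <= L /\
    forall d, Gam d -> forall x g, S (x, g) ->
      pnorm ip (fun j => reloc As d g x j - reloc As g g x j)
        <= L * `|d - g|.
Proof.
have hA1 := hA 1%N ltac:(apply/andP; split => //; lia).
have [a [u0 hau]] := graph_ne hH hA1.
have [e he0 heG] := @gam_lb R Gam hGpos hGcl.
case: hSb => M hM.
pose P := 4 * M ^+ 2 + 10 * ip a a + 8 * (M ^+ 2 * ip u0 u0).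
pose K := 2 * M ^+ 2 + (N.-1)%:R * (2 * P).
have hN1 : (0 < N.-1)%N by lia.
pose i0 : 'I_N.-1 := Ordinal hN1.
exists (Num.sqrt K / e); split; first by rewrite divr_ge0 ?sqrtr_ge0 ?ltW.
move=> d hd x g hS.
have [hGg _] := hSfix _ _ hS.
have hg := hGpos _ hGg.
have hge := heG _ hGg.
have hMxg := hM _ _ hS.
set s := \sum_(j < N.-1) ip (x j) (x j).
have hs0 : 0 <= s by apply: sumr_ge0 => j _; exact: ip_ge0.
have hpn : pnorm ip x ^+ 2 = s by rewrite /pnorm sqr_sqrtr.
rewrite hpn in hMxg.
have hsM : s + g ^+ 2 <= M ^+ 2.
  have h0 : 0 <= s + g ^+ 2 by rewrite addr_ge0 // sqr_ge0.
  have := ler_pM (sqrtr_ge0 _) (sqrtr_ge0 _) hMxg hMxg.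
  by rewrite -expr2 sqr_sqrtr // expr2.
have hx1 : xs x 1 = x i0.
  by rewrite /xs insubT /=; congr x; apply: val_inj.
have hx1s : ip (xs x 1) (xs x 1) <= s.
  rewrite hx1 /s (bigD1 i0) //= lerDl; apply: sumr_ge0 => j _; exact: ip_ge0.
set p := J As g 1 (xs x 1).
have [u [hpu hxpu]] := resolvent_spec hH (xs x 1) hA1 hg.
have hpP : ip p p <= P.
  have := res_bound hH hA1.1 hg hau hpu hxpu.
  rewrite -/p /P => h; apply: le_trans h _.
  have hu0 := ip_ge0 hH u0.
  have hg2 : g ^+ 2 <= M ^+ 2 by lra.
  have := ler_wpM2r hu0 hg2; have := sqr_ge0 g; lra.
have hdiff : forall j, reloc As d g x j - reloc As g g x j = (d / g - 1) *: (x j - p).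
  have hg0 : g != 0 by rewrite gt_eqF.
  move=> j; rewrite /reloc -/p (mulfV hg0).
  case: ifP => /eqP hj.
  - have -> : j = i0 by apply: val_inj.
    by rewrite -hx1 lin_reloc0.
  - exact: lin_reloc.
have hsumE : \sum_(j < N.-1) ip (reloc As d g x j - reloc As g g x j) (reloc As d g x j - reloc As g g x j) = (d/g - 1)^+2 * \sum_(j < N.-1) ip (x j - p) (x j - p).
  rewrite mulr_sumr; apply: eq_bigr => i _.
  by rewrite (hdiff i) (ipZl hH) (ipZr hH) mulrA -expr2.
have -> : pnorm ip (fun j => reloc As d g x j - reloc As g g x j) =
   Num.sqrt ((d/g - 1)^+2 * \sum_(j < N.-1) ip (x j - p) (x j - p)).
  by rewrite /pnorm; congr Num.sqrt; exact: hsumE.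
rewrite sqrtrM ?sqr_ge0 // sqrtr_sqr.
have hc : d / g - 1 = (d - g) / g by field; rewrite gt_eqF.
rewrite hc normrM normfV (gtr0_norm hg).
have hsum : \sum_(j < N.-1) ip (x j - p) (x j - p) <= K.
  apply: le_trans (ler_sum _ (fun j _ => ip_par' hH (x j) p)) _.
  rewrite big_split /= -mulr_sumr sumr_const card_ord -mulr_natl.
  rewrite /K -/s.
  have := ler_wpM2l (ler0n _ N.-1) (ler_wpM2l (ler0n _ 2) hpP).
  have : g ^+ 2 >= 0 by rewrite sqr_ge0.
  lra.
have hsq : Num.sqrt (\sum_(j < N.-1) ip (x j - p) (x j - p)) <= Num.sqrt K.
  exact: ler_wsqrtr.
have hinv : g^-1 <= e^-1 by rewrite lef_pV2 ?posrE.
rewrite [X in _ <= X]mulrC -mulrA; apply: ler_wpM2l; first exact: normr_ge0.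
rewrite mulrC; apply: ler_pM => //.
by rewrite invr_ge0 ltW.
Qed.
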